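(* Let $L$ be a positive integer, let $n_1,\dots,n_L$ be integers with $1\le n_i\le L$, and put $M=\sum_{i=1}^L n_i$. Let $\mathcal P$ be the set of vectors $\mathbf p=\frac1M\sum_{i=1}^L\mathbf e_i\in\mathbb R^L$ where each $\mathbf e_i\in\{0,1\}^L$ has exactly $n_i$ ones, and let $\mathrm{conv}(\mathcal P)$ be its convex hull. Let $\mathbf e_i^\star\in\{0,1\}^L$ be the vector whose first $n_i$ components are $1$ and remaining $L-n_i$ components are $0$, and set $\mathbf p^\star=\frac1M\sum_{i=1}^L\mathbf e_i^\star$. Then $\mathbf p^\star$ is a probability mass function on $[L]$ and $$H(\mathbf p^\star)=\min_{\mathbf p\in\mathcal P}H(\mathbf p)=\min_{\mathbf p\in\mathrm{conv}(\mathcal P)}H(\mathbf p);$$ moreover every minimizer of $H$ over $\mathrm{conv}(\mathcal P)$ is a permutation of (the components of) $\mathbf p^\star$.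
   Context: $H(\mathbf p)=-\sum_i\mathbf p(i)\log_2\mathbf p(i)$ is the Shannon entropy (with $0\log0=0$). In the paper, $L=2^{x+y}$, $M=3^{x+y}$ and the $n_i$ are the sizes of the classes of input triples with a given arithmetic sum, grouped by the value of the third input; $\mathbf p^\star$ is called the ''clumpy'' distribution. *)

(* Defs.v *)
From Stdlib Require Import Reals Lra List Permutation.
Open Scope R_scope.

Definition sumR (n : nat) (f : nat -> R) : R :=
  fold_right Rplus 0 (map f (seq 0 n)).

Definition log2 (x : R) : R := ln x / ln 2.

(* x log2 x with the convention 0 log 0 = 0 *)
Definition plog2 (x : R) : R := if Req_EM_T x 0 then 0 else x * log2 x.

(* Shannon entropy of a vector p in R^L (components p 0, ..., p (L-1)) *)
Definition entropy (L : nat) (p : nat -> R) : R := - sumR L (fun j => plog2 (p j)).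

Definition Msum (L : nat) (n : nat -> nat) : R := sumR L (fun i => INR (n i)).

(* p is in the set P: p = (1/M) sum_i e_i where e_i in {0,1}^L has exactly n_i ones
   (e_i is given as E i). Vectors are compared on components 0..L-1. *)
Definition inP (L : nat) (n : nat -> nat) (p : nat -> R) : Prop :=
  exists E : nat -> nat -> R,
    (forall i j, (i < L)%nat -> (j < L)%nat -> E i j = 0 \/ E i j = 1) /\
    (forall i, (i < L)%nat -> sumR L (fun j => E i j) = INR (n i)) /\
    (forall j, (j < L)%nat -> p j = / Msum L n * sumR L (fun i => E i j)).

Definition in_convP (L : nat) (n : nat -> nat) (p : nat -> R) : Prop :=
  exists (K : nat) (w : nat -> R) (q : nat -> nat -> R),
    (forall k, (k < K)%nat -> 0 <= w k /\ inP L n (q k)) /\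
    sumR K w = 1 /\
    (forall j, (j < L)%nat -> p j = sumR K (fun k => w k * q k j)).

Definition pstar (L : nat) (n : nat -> nat) (j : nat) : R :=
  / Msum L n * sumR L (fun i => if Nat.ltb j (n i) then 1 else 0).

Definition is_pmf (L : nat) (p : nat -> R) : Prop :=
  (forall j, (j < L)%nat -> 0 <= p j) /\ sumR L p = 1.

(* Main.v *)
Require Import Defs.
From Stdlib Require Import Reals Lra Lia List Permutation Sorted.
Open Scope R_scope.

Definition lsum (l : list R) : R := fold_right Rplus 0 l.

Lemma lsum_app l1 l2 : lsum (l1 ++ l2) = lsum l1 + lsum l2.
Proof. induction l1; simpl; [lra|]. unfold lsum in *; simpl; rewrite IHl1; lra. Qed.

Lemma lsum_perm l1 l2 : Permutation l1 l2 -> lsum l1 = lsum l2.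
Proof. induction 1; unfold lsum in *; simpl; lra. Qed.

Lemma sumR_lsum n f : sumR n f = lsum (map f (seq 0 n)).
Proof. reflexivity. Qed.

Lemma sumR_S n f : sumR (S n) f = sumR n f + f n.
Proof. rewrite !sumR_lsum, seq_S, map_app, lsum_app. simpl. unfold lsum; simpl. ring. Qed.

Lemma lsum_map_ext (s : list nat) f g : (forall j, In j s -> f j = g j) ->
  lsum (map f s) = lsum (map g s).
Proof. intros H; f_equal; apply map_ext_in; auto. Qed.

Lemma sumR_ext n f g : (forall j, (j < n)%nat -> f j = g j) -> sumR n f = sumR n g.
Proof. intros H; apply lsum_map_ext; intros j Hj; apply in_seq in Hj; apply H; lia. Qed.

Lemma lsum_map_plus (s : list nat) f g :
  lsum (map (fun j => f j + g j) s) = lsum (map f s) + lsum (map g s).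
Proof. induction s; unfold lsum in *; simpl; [lra|]. rewrite IHs; lra. Qed.

Lemma lsum_map_minus (s : list nat) f g :
  lsum (map (fun j => f j - g j) s) = lsum (map f s) - lsum (map g s).
Proof. induction s; unfold lsum in *; simpl; [lra|]. rewrite IHs; lra. Qed.

Lemma lsum_map_scal (s : list nat) c f :
  lsum (map (fun j => c * f j) s) = c * lsum (map f s).
Proof. induction s; unfold lsum in *; simpl; [lra|]. rewrite IHs; lra. Qed.

Lemma lsum_map_const (s : list nat) c :
  lsum (map (fun _ => c) s) = INR (length s) * c.
Proof. induction s; unfold lsum in *; cbn [map fold_right length]; [simpl; lra|]. rewrite IHs, S_INR; lra. Qed.

Lemma lsum_map_le (s : list nat) f g : (forall j, In j s -> f j <= g j) ->
  lsum (map f s) <= lsum (map g s).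
Proof.
  induction s; intros H; unfold lsum in *; simpl; [lra|].
  pose proof (H a (or_introl eq_refl)). assert (IH := IHs (fun j Hj => H j (or_intror Hj))). lra.
Qed.

Lemma lsum_map_nonneg (s : list nat) f : (forall j, In j s -> 0 <= f j) ->
  0 <= lsum (map f s).
Proof.
  intros H. replace 0 with (lsum (map (fun _ => 0) s)).
  - apply lsum_map_le; auto.
  - rewrite lsum_map_const; lra.
Qed.

Lemma lsum_map_single (s : list nat) f a : (forall j, In j s -> 0 <= f j) -> In a s ->
  f a <= lsum (map f s).
Proof.
  induction s; intros H Ha; [destruct Ha|]. unfold lsum; simpl.
  fold (lsum (map f s)).
  destruct Ha as [<-|Ha].
  - pose proof (lsum_map_nonneg s f (fun j Hj => H j (or_intror Hj))). lra.
  - pose proof (IHs (fun j Hj => H j (or_intror Hj)) Ha). pose proof (H a0 (or_introl eq_refl)). lra.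
Qed.

Lemma lsum_map_swap (s1 s2 : list nat) (F : nat -> nat -> R) :
  lsum (map (fun i => lsum (map (F i) s2)) s1) =
  lsum (map (fun j => lsum (map (fun i => F i j) s1)) s2).
Proof.
  induction s1; simpl.
  - unfold lsum at 1; simpl. rewrite lsum_map_const; lra.
  - unfold lsum at 1; simpl. fold (lsum (map (fun i => lsum (map (F i) s2)) s1)).
    rewrite IHs1. rewrite <- lsum_map_plus. reflexivity.
Qed.

Lemma sumR_swap n m (F : nat -> nat -> R) :
  sumR n (fun i => sumR m (fun j => F i j)) = sumR m (fun j => sumR n (fun i => F i j)).
Proof. apply lsum_map_swap. Qed.

Lemma sumR_le n f g : (forall j, (j < n)%nat -> f j <= g j) -> sumR n f <= sumR n g.
Proof. intros H; apply lsum_map_le; intros j Hj; apply in_seq in Hj; apply H; lia. Qed.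

Lemma sumR_nonneg n f : (forall j, (j < n)%nat -> 0 <= f j) -> 0 <= sumR n f.
Proof. intros H; apply lsum_map_nonneg; intros j Hj; apply in_seq in Hj; apply H; lia. Qed.

Lemma sumR_single n f a : (forall j, (j < n)%nat -> 0 <= f j) -> (a < n)%nat -> f a <= sumR n f.
Proof. intros H Ha; apply lsum_map_single; [intros j Hj; apply in_seq in Hj; apply H; lia| apply in_seq; lia]. Qed.

Lemma sumR_split k L f : (k <= L)%nat ->
  sumR L f = sumR k f + lsum (map f (seq k (L - k))).
Proof.
  intros H. rewrite !sumR_lsum. replace L with (k + (L - k))%nat at 1 by lia.
  rewrite seq_app, map_app, lsum_app. reflexivity.
Qed.

Lemma sumR_count k m : sumR k (fun t => if Nat.ltb t m then 1 else 0) = INR (Nat.min m k).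
Proof.
  induction k; [simpl; unfold sumR; simpl; rewrite Nat.min_0_r; reflexivity|].
  rewrite sumR_S, IHk. destruct (Nat.ltb_spec k m).
  - replace (Nat.min m (S k)) with (S (Nat.min m k)) by lia. rewrite S_INR; lra.
  - replace (Nat.min m (S k)) with (Nat.min m k) by lia. lra.
Qed.

Lemma sum_zero_each n f : (forall j, (j < n)%nat -> 0 <= f j) -> sumR n f <= 0 ->
  forall j, (j < n)%nat -> f j = 0.
Proof. intros H Hs j Hj. pose proof (sumR_single n f j H Hj). pose proof (H j Hj). lra. Qed.

Lemma sumR_minus n f g : sumR n (fun t => f t - g t) = sumR n f - sumR n g.
Proof. apply lsum_map_minus. Qed.


Lemma ln_le' x y : 0 < x -> x <= y -> ln x <= ln y.
Proof. intros Hx Hxy. destruct (Req_dec x y) as [->|Hne]; [lra|]. left; apply ln_increasing; lra. Qed.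

Lemma ln_strict u : 0 < u -> u <> 1 -> ln u < u - 1.
Proof.
  intros Hu Hne. pose proof (ln_neq_0 u Hne Hu). pose proof (exp_ineq1 (ln u) H).
  rewrite exp_ln in H0 by lra. lra.
Qed.

Lemma ln_weak u : 0 < u -> ln u <= u - 1.
Proof.
  intros Hu. destruct (Req_dec u 1) as [->|Hne]; [rewrite ln_1; lra|].
  left; apply ln_strict; auto.
Qed.

Lemma gibbs_term x y : 0 <= x -> 0 <= y -> (x = 0 -> y = 0) ->
  y - x <= y * ln y - y * ln x /\ (y * ln y - y * ln x = y - x -> x = y).
Proof.
  intros Hx Hy Hxy. destruct (Req_dec y 0) as [Hy0|Hy0].
  - subst y. split; [lra|]. intros. lra.
  - assert (Hxp : 0 < x) by (destruct (Req_dec x 0); [apply Hxy in H; lra| lra]).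
    assert (Hyp : 0 < y) by lra.
    assert (E : ln x - ln y = ln (x / y)).
    { unfold Rdiv. rewrite ln_mult, ln_Rinv; try lra. apply Rinv_0_lt_compat; lra. }
    assert (Hq : 0 < x / y) by (apply Rdiv_lt_0_compat; lra).
    assert (Hyx : y * (x / y) = x) by (field; lra).
    split.
    + pose proof (ln_weak (x/y) Hq).
      assert (y * ln (x / y) <= y * (x / y - 1)) by (apply Rmult_le_compat_l; lra).
      rewrite <- E in H0. nra.
    + intros Heq. destruct (Req_dec (x / y) 1) as [H1|H1].
      * assert (x = y * (x/y)) by lra. rewrite H1 in H. lra.
      * pose proof (ln_strict (x/y) Hq H1).
        assert (y * ln (x / y) < y * (x / y - 1)) by (apply Rmult_lt_compat_l; lra).
        rewrite <- E in H0. nra.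
Qed.

Lemma abel (d c : nat -> R) m :
  (forall k, (k < m)%nat -> 0 <= sumR (S k) d * (c k - c (S k))) ->
  sumR (S m) d * c m <= sumR (S m) (fun t => d t * c t).
Proof.
  induction m; intros H.
  - unfold sumR; simpl. lra.
  - rewrite (sumR_S (S m) d), (sumR_S (S m) (fun t => d t * c t)).
    assert (IH := IHm (fun k Hk => H k ltac:(lia))). pose proof (H m ltac:(lia)). nra.
Qed.

Section Core.
Variables (L : nat) (x y : nat -> R).
Hypotheses (Hx0 : forall t, (t < L)%nat -> 0 <= x t)
  (Hy0 : forall t, (t < L)%nat -> 0 <= y t)
  (Hxm : forall t, (S t < L)%nat -> x (S t) <= x t)
  (Hxs : sumR L x = 1) (Hys : sumR L y = 1)
  (Hmaj : forall k, (k <= L)%nat -> sumR k x <= sumR k y).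

Lemma tail_zero k : (k < L)%nat -> x k = 0 -> forall u, (k <= u < L)%nat -> x u = 0.
Proof.
  intros Hk H0 u Hu. induction u.
  - replace k with 0%nat in H0 by lia. auto.
  - destruct (Nat.eq_dec k (S u)) as [<-|Hne]; auto.
    assert (x u = 0) by (apply IHu; lia). pose proof (Hxm u ltac:(lia)). pose proof (Hx0 (S u) ltac:(lia)). lra.
Qed.

Lemma ZK k : (k < L)%nat -> x k = 0 -> sumR k x = 1 /\ sumR k y = 1 /\ y k = 0.
Proof.
  intros Hk H0.
  assert (Hsx : sumR k x = 1).
  { rewrite (sumR_split k L x) in Hxs by lia.
    rewrite (lsum_map_ext _ x (fun _ => 0)) in Hxs.
    - rewrite lsum_map_const in Hxs. lra.
    - intros j Hj. apply in_seq in Hj. apply (tail_zero k); auto; lia. }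
  pose proof (Hmaj k ltac:(lia)).
  pose proof (sumR_split k L y ltac:(lia)) as Hsp.
  assert (Ht : 0 <= lsum (map y (seq k (L - k)))).
  { apply lsum_map_nonneg. intros j Hj; apply in_seq in Hj; apply Hy0; lia. }
  assert (Hsy : sumR k y = 1) by lra.
  split; [auto|split; auto].
  assert (Hk' : In k (seq k (L - k))) by (apply in_seq; lia).
  pose proof (lsum_map_single (seq k (L - k)) y k ltac:(intros j Hj; apply in_seq in Hj; apply Hy0; lia) Hk').
  pose proof (Hy0 k Hk). lra.
Qed.

Lemma core :
  sumR L (fun t => x t * ln (x t)) <= sumR L (fun t => y t * ln (y t)) /\
  (sumR L (fun t => x t * ln (x t)) = sumR L (fun t => y t * ln (y t)) ->
   forall t, (t < L)%nat -> x t = y t).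
Proof.
  assert (HZ : forall t, (t < L)%nat -> x t = 0 -> y t = 0) by (intros t Ht H; apply (ZK t Ht H)).
  assert (G : forall t, (t < L)%nat -> 0 <= (y t * ln (y t) - y t * ln (x t)) - (y t - x t)).
  { intros t Ht. destruct (gibbs_term (x t) (y t) (Hx0 t Ht) (Hy0 t Ht) (HZ t Ht)). lra. }
  assert (A : 0 <= sumR L (fun t => (y t - x t) * ln (x t))).
  { destruct (Nat.eq_dec L 0) as [E0|E0].
    - rewrite E0; unfold sumR; simpl; lra.
    - assert (EL : L = S (pred L)) by lia. set (m := pred L) in EL. rewrite EL.
      pose proof (abel (fun t => y t - x t) (fun t => ln (x t)) m) as Hab.
      assert (Hd : sumR (S m) (fun t => y t - x t) = 0).
      { rewrite sumR_minus, <- EL, Hxs, Hys. lra. }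
      rewrite Hd in Hab. simpl in Hab. rewrite Rmult_0_l in Hab. apply Hab.
      intros k Hk. cbv beta. rewrite sumR_minus.
      pose proof (Hmaj (S k) ltac:(lia)).
      destruct (Req_dec (x (S k)) 0) as [H0|H0].
      + destruct (ZK (S k) ltac:(lia) H0) as [H1 [H2 _]]. rewrite H1, H2. lra.
      + assert (Hp : 0 < x (S k)) by (pose proof (Hx0 (S k) ltac:(lia)); lra).
        pose proof (ln_le' _ _ Hp (Hxm k ltac:(lia))). apply Rmult_le_pos; lra. }
  assert (E1 : sumR L (fun t => (y t - x t) * ln (x t)) =
     sumR L (fun t => y t * ln (x t)) - sumR L (fun t => x t * ln (x t))).
  { rewrite <- sumR_minus. apply sumR_ext. intros; ring. }
  assert (E2 : sumR L (fun t => (y t * ln (y t) - y t * ln (x t)) - (y t - x t)) =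
     sumR L (fun t => y t * ln (y t)) - sumR L (fun t => y t * ln (x t)) - (sumR L y - sumR L x)).
  { rewrite !sumR_minus. reflexivity. }
  pose proof (sumR_nonneg L _ G) as G'.
  split.
  - rewrite Hxs, Hys in E2. lra.
  - intros Heq t Ht.
    assert (Hle : sumR L (fun t => (y t * ln (y t) - y t * ln (x t)) - (y t - x t)) <= 0)
      by (rewrite Hxs, Hys in E2; lra).
    pose proof (sum_zero_each L _ G Hle t Ht).
    destruct (gibbs_term (x t) (y t) (Hx0 t Ht) (Hy0 t Ht) (HZ t Ht)). apply H1. lra.
Qed.
End Core.

Fixpoint ins (p : nat -> R) (a : nat) (l : list nat) : list nat :=
  match l with
  | nil => a :: nil
  | b :: l' => if Rle_dec (p b) (p a) then a :: l else b :: ins p a l'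
  end.

Fixpoint isort (p : nat -> R) (l : list nat) : list nat :=
  match l with nil => nil | a :: l' => ins p a (isort p l') end.

Lemma ins_perm p a l : Permutation (ins p a l) (a :: l).
Proof.
  induction l; simpl; [auto|]. destruct Rle_dec; [auto|].
  eapply perm_trans; [apply perm_skip, IHl| apply perm_swap].
Qed.

Lemma isort_perm p l : Permutation (isort p l) l.
Proof.
  induction l; simpl; [auto|]. eapply perm_trans; [apply ins_perm| auto].
Qed.

Definition Rd (p : nat -> R) (a b : nat) : Prop := p b <= p a.

Lemma ins_hd p a b l : HdRel (Rd p) b l -> Rd p b a -> HdRel (Rd p) b (ins p a l).
Proof.
  intros H Hba. destruct l; simpl; [constructor; auto|].
  destruct Rle_dec; constructor; auto. inversion H; auto.
Qed.

Lemma ins_sorted p a l : Sorted (Rd p) l -> Sorted (Rd p) (ins p a l).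
Proof.
  induction l; intros H; simpl; [constructor; auto|].
  destruct Rle_dec as [Hle|Hn].
  - constructor; [auto| constructor; unfold Rd; auto].
  - apply Sorted_inv in H as [H1 H2]. constructor; auto.
    apply ins_hd; auto. unfold Rd; lra.
Qed.

Lemma isort_sorted p l : Sorted (Rd p) (isort p l).
Proof. induction l; simpl; [constructor|]. apply ins_sorted; auto. Qed.

Lemma sorted_nth p l : Sorted (Rd p) l -> forall t d, (S t < length l)%nat ->
  p (nth (S t) l d) <= p (nth t l d).
Proof.
  induction l; intros H t d Ht; simpl in Ht; [lia|].
  apply Sorted_inv in H as [H1 H2]. destruct t.
  - destruct l; simpl in Ht; [lia|]. inversion H2; auto.
  - simpl. destruct l; simpl in Ht; [lia|]. apply IHl; auto. simpl; lia.
Qed.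

Lemma map_nth_firstn (l : list nat) k d : (k <= length l)%nat ->
  map (fun t => nth t l d) (seq 0 k) = firstn k l.
Proof.
  revert k; induction l; intros k Hk.
  - simpl in Hk. replace k with 0%nat by lia. reflexivity.
  - destruct k; [reflexivity|]. simpl in Hk.
    simpl. f_equal. rewrite <- seq_shift, map_map. apply IHl. lia.
Qed.

Lemma sum_perm_idx (s : list nat) L (f : nat -> R) : Permutation s (seq 0 L) ->
  sumR L (fun t => f (nth t s 0%nat)) = sumR L f.
Proof.
  intros H. assert (Hl : length s = L) by (rewrite (Permutation_length H), length_seq; auto).
  unfold sumR. rewrite <- (map_map (fun t => nth t s 0%nat) f).
  rewrite map_nth_firstn by lia. rewrite <- Hl, firstn_all.
  apply lsum_perm. apply Permutation_map; rewrite Hl; auto.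
Qed.

Lemma subsum (s : list nat) L f : NoDup s -> (forall j, In j s -> (j < L)%nat) ->
  (forall j, (j < L)%nat -> 0 <= f j) -> lsum (map f s) <= sumR L f.
Proof.
  intros Hnd Hin Hf.
  set (rest := filter (fun j => if in_dec Nat.eq_dec j s then false else true) (seq 0 L)).
  assert (Hp : Permutation (s ++ rest) (seq 0 L)).
  { apply NoDup_Permutation.
    - apply NoDup_app; auto. apply NoDup_filter, seq_NoDup.
      intros a Ha Hr. unfold rest in Hr. apply filter_In in Hr as [_ Hr].
      destruct in_dec; [discriminate|contradiction].
    - apply seq_NoDup.
    - intros z; split; intros Hz.
      + apply in_app_or in Hz as [Hz|Hz]. apply in_seq. pose proof (Hin z Hz); lia.
        unfold rest in Hz. apply filter_In in Hz; tauto.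
      + destruct (in_dec Nat.eq_dec z s) as [Hs|Hs]; apply in_or_app; [left; auto|right].
        unfold rest. apply filter_In. split; auto. destruct in_dec; [contradiction|auto]. }
  rewrite sumR_lsum. rewrite <- (lsum_perm _ _ (Permutation_map f Hp)).
  rewrite map_app, lsum_app.
  assert (0 <= lsum (map f rest)).
  { apply lsum_map_nonneg. intros j Hj. unfold rest in Hj. apply filter_In in Hj as [Hj _].
    apply in_seq in Hj. apply Hf; lia. }
  lra.
Qed.

Section Main.
Variables (L : nat) (n : nat -> nat).
Hypotheses (hL : (1 <= L)%nat) (hn : forall i, (i < L)%nat -> (1 <= n i <= L)%nat).

Lemma M_pos : 0 < Msum L n.
Proof.
  unfold Msum. assert (sumR L (fun _ => 1) <= sumR L (fun i => INR (n i))).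
  { apply sumR_le. intros j Hj. pose proof (hn j Hj). apply (le_INR 1). lia. }
  unfold sumR at 1 in H. rewrite lsum_map_const, length_seq in H.
  apply (le_INR 1) in hL. simpl in hL. lra.
Qed.

Lemma pstar_sum k : sumR k (pstar L n) = / Msum L n * sumR L (fun i => INR (Nat.min (n i) k)).
Proof.
  unfold pstar. unfold sumR at 1. rewrite lsum_map_scal. f_equal.
  rewrite <- sumR_lsum. rewrite sumR_swap. apply sumR_ext. intros; apply sumR_count.
Qed.

Lemma pstar_pmf : is_pmf L (pstar L n).
Proof.
  pose proof M_pos. split.
  - intros j Hj. unfold pstar. apply Rmult_le_pos; [left; apply Rinv_0_lt_compat; auto|].
    apply sumR_nonneg. intros; destruct Nat.ltb; lra.
  - rewrite pstar_sum. rewrite (sumR_ext _ _ (fun i => INR (n i))).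
    + fold (Msum L n). field. lra.
    + intros j Hj. pose proof (hn j Hj). f_equal. lia.
Qed.

Lemma pstar_inP : inP L n (pstar L n).
Proof.
  exists (fun i j => if Nat.ltb j (n i) then 1 else 0). split; [|split].
  - intros i j _ _. destruct Nat.ltb; auto.
  - intros i Hi. rewrite sumR_count. pose proof (hn i Hi). f_equal. lia.
  - intros j Hj. reflexivity.
Qed.

Definition majP (p : nat -> R) : Prop :=
  (forall j, (j < L)%nat -> 0 <= p j) /\ sumR L p = 1 /\
  (forall s, NoDup s -> (forall j, In j s -> (j < L)%nat) ->
     lsum (map p s) <= sumR (length s) (pstar L n)).

Lemma inP_maj p : inP L n p -> majP p.
Proof.
  intros [E [H01 [Hrow Hp]]]. pose proof M_pos as HM.
  assert (HE0 : forall i j, (i < L)%nat -> (j < L)%nat -> 0 <= E i j /\ E i j <= 1).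
  { intros i j Hi Hj. destruct (H01 i j Hi Hj) as [-> | ->]; lra. }
  assert (Hinv : 0 < / Msum L n) by (apply Rinv_0_lt_compat; auto).
  split; [|split].
  - intros j Hj. rewrite Hp by auto. apply Rmult_le_pos; [lra|].
    apply sumR_nonneg. intros i Hi; apply HE0; auto.
  - rewrite (sumR_ext _ _ (fun j => / Msum L n * sumR L (fun i => E i j))) by auto.
    unfold sumR at 1. rewrite lsum_map_scal, <- sumR_lsum, <- sumR_swap.
    rewrite (sumR_ext _ _ (fun i => INR (n i))) by auto. fold (Msum L n). field. lra.
  - intros s Hnd Hin.
    rewrite (lsum_map_ext _ _ (fun j => / Msum L n * sumR L (fun i => E i j)))
      by (intros j Hj; apply Hp, Hin; auto).
    rewrite lsum_map_scal. rewrite pstar_sum. apply Rmult_le_compat_l; [lra|].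
    transitivity (sumR L (fun i => lsum (map (E i) s))).
    + right. symmetry. apply lsum_map_swap.
    + apply sumR_le. intros i Hi.
      assert (B1 : lsum (map (E i) s) <= INR (n i)).
      { rewrite <- Hrow by auto. apply subsum; auto. intros j Hj; apply HE0; auto. }
      assert (B2 : lsum (map (E i) s) <= INR (length s)).
      { rewrite <- (Rmult_1_r (INR (length s))), <- lsum_map_const.
        apply lsum_map_le. intros j Hj; apply HE0; auto. }
      destruct (Nat.min_spec (n i) (length s)) as [[_ ->]|[_ ->]]; auto.
Qed.

Lemma convP_maj p : in_convP L n p -> majP p.
Proof.
  intros [K [w [q [Hk [Hw Hp]]]]].
  assert (Hq : forall k, (k < K)%nat -> 0 <= w k /\ majP (q k)).
  { intros k Hk'. destruct (Hk k Hk'); split; auto; apply inP_maj; auto. }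
  split; [|split].
  - intros j Hj. rewrite Hp by auto. apply sumR_nonneg. intros k Hk'.
    destruct (Hq k Hk') as [H1 [H2 _]]. apply Rmult_le_pos; auto.
  - rewrite (sumR_ext _ _ (fun j => sumR K (fun k => w k * q k j))) by auto.
    rewrite <- sumR_swap. rewrite <- Hw. apply sumR_ext. intros k Hk'.
    unfold sumR at 1. rewrite lsum_map_scal. rewrite <- sumR_lsum.
    destruct (Hq k Hk') as [_ [_ [-> _]]]. ring.
  - intros s Hnd Hin.
    rewrite (lsum_map_ext _ _ (fun j => sumR K (fun k => w k * q k j)))
      by (intros j Hj; apply Hp, Hin; auto).
    transitivity (sumR K (fun k => lsum (map (fun j => w k * q k j) s))).
    + right. apply lsum_map_swap.
    + transitivity (sumR K (fun k => sumR (length s) (pstar L n) * w k)).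
      * apply sumR_le. intros k Hk'. rewrite lsum_map_scal.
        destruct (Hq k Hk') as [H1 [_ [_ H3]]]. rewrite Rmult_comm.
        apply Rmult_le_compat_r; auto.
      * unfold sumR at 1. rewrite lsum_map_scal. rewrite <- sumR_lsum, Hw. lra.
Qed.

Lemma ln2_pos : 0 < ln 2.
Proof. rewrite <- ln_1. apply ln_increasing; lra. Qed.

Lemma entropy_eq q : entropy L q = - (/ ln 2 * sumR L (fun j => q j * ln (q j))).
Proof.
  unfold entropy. f_equal. unfold sumR at 2. rewrite <- lsum_map_scal.
  apply lsum_map_ext. intros j _. unfold plog2, log2.
  destruct Req_EM_T as [->|_]; [ring| unfold Rdiv; ring].
Qed.

Lemma main_maj p : majP p ->
  entropy L (pstar L n) <= entropy L p /\
  (entropy L p = entropy L (pstar L n) ->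
   Permutation (map p (seq 0 L)) (map (pstar L n) (seq 0 L))).
Proof.
  intros [Hp0 [Hps Hmaj]].
  set (sg := isort p (seq 0 L)).
  assert (Hperm : Permutation sg (seq 0 L)) by apply isort_perm.
  assert (Hlen : length sg = L) by (rewrite (Permutation_length Hperm), length_seq; auto).
  assert (Hnd : NoDup sg) by (apply (Permutation_NoDup (Permutation_sym Hperm)), seq_NoDup).
  assert (Hin : forall j, In j sg -> (j < L)%nat).
  { intros j Hj. apply (Permutation_in _ Hperm) in Hj. apply in_seq in Hj. lia. }
  set (x := fun t => p (nth t sg 0%nat)).
  destruct pstar_pmf as [Hy0 Hys].
  assert (Hx0 : forall t, (t < L)%nat -> 0 <= x t).
  { intros t Ht. unfold x. apply Hp0, Hin, nth_In. lia. }
  assert (Hxm : forall t, (S t < L)%nat -> x (S t) <= x t).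
  { intros t Ht. unfold x. apply sorted_nth; [apply isort_sorted| lia]. }
  assert (Hxs : sumR L x = 1).
  { unfold x. rewrite (sum_perm_idx sg L p Hperm). auto. }
  assert (Hmx : forall k, (k <= L)%nat -> sumR k x <= sumR k (pstar L n)).
  { intros k Hk. unfold x. unfold sumR at 1.
    rewrite <- (map_map (fun t => nth t sg 0%nat) p), map_nth_firstn by lia.
    rewrite <- (firstn_skipn k sg) in Hnd, Hin.
    replace k with (length (firstn k sg)) at 2 by (apply firstn_length_le; lia).
    apply Hmaj.
    - apply NoDup_app_remove_r in Hnd; auto.
    - intros j Hj. apply Hin, in_or_app; auto. }
  destruct (core L x (pstar L n) Hx0 Hy0 Hxm Hxs Hys Hmx) as [C1 C2].
  assert (Ex : sumR L (fun t => x t * ln (x t)) = sumR L (fun j => p j * ln (p j))).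
  { unfold x. apply (sum_perm_idx sg L (fun j => p j * ln (p j)) Hperm). }
  rewrite Ex in C1, C2. rewrite !entropy_eq. pose proof ln2_pos as Hl2.
  assert (Hi : 0 < / ln 2) by (apply Rinv_0_lt_compat; auto).
  split.
  - apply Ropp_le_contravar. apply Rmult_le_compat_l; lra.
  - intros Heq. assert (Heq' : sumR L (fun j => p j * ln (p j)) =
        sumR L (fun j => pstar L n j * ln (pstar L n j))).
    { apply Rmult_eq_reg_l with (/ ln 2); lra. }
    specialize (C2 Heq').
    apply perm_trans with (map p sg).
    + apply Permutation_map, Permutation_sym; auto.
    + rewrite <- (firstn_all sg), <- map_nth_firstn with (d := 0%nat) by lia.
      rewrite map_map, Hlen. apply Permutation_refl'. apply map_ext_in.
      intros t Ht. apply in_seq in Ht. apply C2. lia.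
Qed.
End Main.

Theorem theorem1 (L : nat) (n : nat -> nat)
  (hL : (1 <= L)%nat)
  (hn : forall i, (i < L)%nat -> (1 <= n i <= L)%nat) :
  is_pmf L (pstar L n) /\
  (inP L n (pstar L n) /\
   (forall p, inP L n p -> entropy L (pstar L n) <= entropy L p)) /\
  (in_convP L n (pstar L n) /\
   (forall p, in_convP L n p -> entropy L (pstar L n) <= entropy L p)) /\
  (forall p, in_convP L n p -> entropy L p = entropy L (pstar L n) ->
     Permutation (map p (seq 0 L)) (map (pstar L n) (seq 0 L))).
Proof.
  split; [apply pstar_pmf; auto|]. split; [split|split; [split|]].
  - apply pstar_inP; auto.
  - intros p Hp. apply main_maj; auto. apply inP_maj; auto.
  - exists 1%nat, (fun _ => 1), (fun _ => pstar L n). split; [|split].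
    + intros k _. split; [lra| apply pstar_inP; auto].
    + unfold sumR; simpl; ring.
    + intros j _. unfold sumR; simpl; ring.
  - intros p Hp. apply main_maj; auto. apply convP_maj; auto.
  - intros p Hp. apply main_maj; auto. apply convP_maj; auto.
Qed.
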